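(* Let $K\geq 4$ and let $H$ be a signed bipartite graph. If a signed bipartite graph $G$ whose $+$ class has size $m$ and $-$ class has size $n$ has at least $K\cdot z(m, n,H)$ edges, then $G$ contains at least $\left(\frac{K}{2}\right)^{\mathrm{e}(H)} \cdot z(m,n,H)$ signed copies of $H$.
   Context: A signed bipartite graph is a bipartite graph with a proper vertex 2-colouring by $+$ and $-$. A signed copy of $H$ in $G$ is a copy of $H$ in $G$ with $+$ vertices mapped into the $+$ class and $-$ vertices into the $-$ class. $z(m,n,H)$ is the maximum number of edges in a signed bipartite graph with $+$ class of size $m$ and $-$ class of size $n$ containing no signed copy of $H$. *)

(* Defs.v *)
From mathcomp Require Import all_boot all_order all_algebra.
Set Implicit Arguments. Unset Strict Implicit. Unset Printing Implicit Defensive.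

(* A signed bipartite graph with + class 'I_m and - class 'I_n is given by its
   edge set E : {set 'I_m * 'I_n} (an edge (u,v) joins the + vertex u to the
   - vertex v). *)
Definition sgraph (m n : nat) := {set 'I_m * 'I_n}.

(* Distinct copies are distinct subgraphs. *)
Definition signed_copies (a b m n : nat) (H : sgraph a b) (G : sgraph m n)
  : {set ({set 'I_m} * {set 'I_n} * {set 'I_m * 'I_n})} :=
  [set X | [exists f : {ffun 'I_a -> 'I_m}, exists g : {ffun 'I_b -> 'I_n},
     [&& injectiveb f, injectiveb g,
         X == (f @: setT, g @: setT, [set (f p.1, g p.2) | p in H])
       & [set (f p.1, g p.2) | p in H] \subset G]]].

Definition has_signed_copy (a b m n : nat) (H : sgraph a b) (G : sgraph m n) : bool :=
  signed_copies H G != set0.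

Definition zext (m n a b : nat) (H : sgraph a b) : nat :=
  \max_(G : sgraph m n | ~~ has_signed_copy H G) #|G|.

(* Main.v *)
Require Import Defs.
From mathcomp Require Import all_boot all_order all_algebra.
From mathcomp Require Import zify.
Set Implicit Arguments. Unset Strict Implicit. Unset Printing Implicit Defensive.

Section Comb.
Variables (a b m n : nat) (H : sgraph a b).
Local Notation C G := (signed_copies H G).
Local Notation z := (zext m n H).

Lemma copies_sub (G G' : sgraph m n) c :
  c \in C G -> c.2 \subset G' -> c \in C G'.
Proof.
rewrite !inE => /existsP[f /existsP[g /and4P[fi gi /eqP E sub]]] sub'.
apply/existsP; exists f; apply/existsP; exists g.
by rewrite fi gi E eqxx /=; rewrite E in sub'.
Qed.

Lemma copies_in (G : sgraph m n) c : c \in C G -> c.2 \subset G.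
Proof.
by rewrite !inE => /existsP[f /existsP[g /and4P[fi gi /eqP E sub]]]; rewrite E.
Qed.

Lemma copies_card (G : sgraph m n) c : c \in C G -> #|c.2| = #|H|.
Proof.
rewrite !inE => /existsP[f /existsP[g /and4P[/injectiveP fi /injectiveP gi /eqP E sub]]].
rewrite E /=; apply: card_imset => [[p1 p2] [q1 q2]] /= [/fi -> /gi ->] //.
Qed.

Lemma copies_del (G : sgraph m n) x :
  C (G :\ x) = [set c in C G | x \notin c.2].
Proof.
apply/setP => c; rewrite inE; apply/idP/andP.
  move=> cin; have := copies_in cin; rewrite subsetD1 => /andP[s1 s2].
  by split=> //; apply: copies_sub cin s1.
move=> [cin xn]; apply: (copies_sub cin).
by rewrite subsetD1 xn copies_in.
Qed.

Lemma free_le (G : sgraph m n) : C G = set0 -> #|G| <= z.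
Proof.
move=> E; rewrite /zext.
by apply: (leq_bigmax_cond (P := fun G => ~~ has_signed_copy H G) (F := fun G => #|G|)); rewrite /has_signed_copy E eqxx.
Qed.

Lemma sub_card (T : finType) (A : {set T}) k :
  k <= #|A| -> exists2 B : {set T}, B \subset A & #|B| = k.
Proof.
elim: k => [|k IH] lt; first by exists set0; rewrite ?sub0set ?cards0.
have [B sB cB] := IH (ltnW lt).
have : B \proper A by rewrite properEcard sB cB lt.
case/properP=> _ [x xA xB]; exists (x |: B).
  by rewrite subUset sub1set xA sB.
by rewrite cardsU1 xB cB.
Qed.

Lemma deletion (G : sgraph m n) : 0 < #|H| -> #|G| - z <= #|C G|.
Proof.
move=> h0; move: {2}#|G| (erefl #|G|) => k; elim: k G => [|k IH] G cG.
  by rewrite cG sub0n.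
case: (leqP #|G| z) => lez; first by rewrite (eqP (_ : _ - _ == 0)) // subn_eq0.
have : C G != set0 by apply/negP => /eqP /free_le; rewrite leqNgt lez.
case/set0Pn => c cin.
have : 0 < #|c.2| by rewrite (copies_card cin).
case/card_gt0P => x xc.
have xG : x \in G by apply: (subsetP (copies_in cin)).
have cG' : #|G :\ x| = k by move: cG; rewrite (cardsD1 x) xG add1n => [[]].
have := IH _ cG'; rewrite copies_del.
have : [set c0 in C G | x \notin c0.2] \proper C G.
  apply/properP; split; first by apply/subsetP => c0; rewrite inE => /andP[].
  by exists c; rewrite // inE xc andbF.
move/proper_card => pc le1.
move: cG; rewrite (cardsD1 x) xG cG' => cG. lia.
Qed.

Lemma cnt_sum (T : finType) (A : {pred T}) (P : pred T) :
  #|[set c in A | P c]| = \sum_(c in A) P c.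
Proof.
rewrite -sum1_card big_mkcond [RHS]big_mkcond /=; apply: eq_bigr => c _.
by rewrite !inE; case: (c \in A); case: (P c).
Qed.

Lemma dcount (G : sgraph m n) :
  \sum_(x in G) #|[set c in C G | x \in c.2]| = #|H| * #|C G|.
Proof.
rewrite (eq_bigr _ (fun x _ => cnt_sum (C G) (fun c => x \in c.2))).
rewrite exchange_big /= mulnC -sum_nat_const.
apply: eq_bigr => c cin; rewrite -(copies_card cin) -sum1_card big_mkcond [RHS]big_mkcond /=.
apply: eq_bigr => x _; have := subsetP (copies_in cin) x.
by case: (x \in c.2) => [/(_ isT) -> //|_]; case: (x \in G).
Qed.

Lemma main_ind (h1 : 0 < #|H|) (h2 : #|H| <= 2 * z) d (G : sgraph m n) :
  #|G| = 2 * z + d -> z * #|G| ^_ #|H| <= #|C G| * (2 * z) ^_ #|H|.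
Proof.
elim: d G => [|d IH] G cG.
  have := deletion G h1; rewrite cG addn0 => le.
  by rewrite leq_mul2r; apply/orP; right; lia.
have G0 : 0 < #|G| by lia.
pose cnt y := #|[set c in C G | y \in c.2]|.
have [x xG xmax] := eq_bigmax_cond cnt G0.
have avg : #|H| * #|C G| <= #|G| * cnt x.
  rewrite -dcount -sum_nat_const; apply: leq_sum => y yG.
  by rewrite -xmax (leq_bigmax_cond (F := cnt)).
have cG' : #|G :\ x| = 2 * z + d by move: cG; rewrite (cardsD1 x) xG; lia.
have := IH _ cG'; rewrite copies_del.
have spl : #|[set c in C G | x \notin c.2]| + cnt x = #|C G|.
  rewrite /cnt !cnt_sum -big_split /= -sum1_card; apply: eq_bigr => c _.
  by case: (x \in c.2).
have E := ffactnS #|G| #|H|; rewrite ffactnSr in E.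
have e1 : #|G :\ x| = #|G|.-1 by lia.
rewrite e1.
move: spl avg E.
set X' := #|[set _ in _ | _]|; set X := #|C G|; set c := cnt x.
set e := #|G|; set h := #|H|; set B := e ^_ h; set A := e.-1 ^_ h; set F := (2 * z) ^_ h.
move=> spl avg E IHd.
have ehpos : 0 < e - h by lia.
rewrite -(leq_pmul2r ehpos).
have s1 : z * B * (e - h) = e * (z * A) by rewrite -mulnA E mulnCA.
have s2 : e * X' + e * c = e * X by rewrite -mulnDr spl.
have s3 : (e - h) * X = e * X - h * X by rewrite mulnBl.
have s4 : e * X' <= (e - h) * X by lia.
rewrite s1 (leq_trans (leq_mul (leqnn e) IHd)) //.
rewrite mulnA [X * F * _]mulnC mulnA leq_mul2r; apply/orP; right; done.
Qed.

End Comb.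

Unset Implicit Arguments.
Import Order.TTheory GRing.Theory Num.Theory.
From mathcomp Require Import ring lra.
Local Open Scope ring_scope.
Theorem lemma4p1 (R : realFieldType) (K : R) (a b m n : nat)
  (H : sgraph a b) (G : sgraph m n) :
  4 <= K ->
  K * (zext m n H)%:R <= (#|G|)%:R ->
  (K / 2) ^+ #|H| * (zext m n H)%:R <= (#|signed_copies H G|)%:R.
Proof.
move=> K4 hyp.
set z := zext m n H in hyp *.
have [z0|zpos] := posnP z.
  by rewrite z0 mulr0 ler0n.
have e4 : (4 * z <= #|G|)%N.
  rewrite -(ler_nat R) natrM; apply: le_trans hyp.
  by rewrite ler_pM2r ?ltr0n.
have hasC : forall G' : sgraph m n, (z < #|G'|)%N -> signed_copies H G' != set0.
  move=> G' lt; apply/negP => /eqP /free_le; rewrite leqNgt lt //.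
have h1 : (0 < #|H|)%N.
  rewrite lt0n; apply/negP => /eqP h0.
  have /set0Pn [c cin] := hasC G ltac:(lia).
  have c0 : c.2 = set0 by apply/eqP; rewrite -cards_eq0 (copies_card cin) h0.
  suff : z = 0%N by lia.
  rewrite /z /zext big_pred0 // => G'; apply/negbTE; rewrite negbK.
  by apply/set0Pn; exists c; apply: (copies_sub cin); rewrite c0 sub0set.
have h2 : (#|H| <= 2 * z)%N.
  have [B sB cB] := sub_card (k := z.+1) (A := G) ltac:(lia).
  have /set0Pn [c cin] := hasC B ltac:(lia).
  have := subset_leq_card (copies_in cin); rewrite (copies_card cin); lia.
have key := main_ind h1 h2 (d := (#|G| - 2 * z)%N) (G := G) ltac:(lia).
set h := #|H| in h1 h2 key *; set e := #|G| in e4 hyp key *.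
set X := #|signed_copies H G| in key *.
have ff : forall j, (j <= 2 * z)%N ->
    (K / 2) ^+ j * ((2 * z) ^_ j)%:R <= (e ^_ j)%:R.
  elim=> [|j IH] lj; first by rewrite expr0 mul1r !ffactn0.
  rewrite !ffactnSr !natrM exprS.
  have -> : K / 2 * (K / 2) ^+ j * (((2 * z) ^_ j)%:R * (2 * z - j)%:R) =
     ((K / 2) ^+ j * ((2 * z) ^_ j)%:R) * (K / 2 * (2 * z - j)%:R) by ring.
  apply: ler_pM.
  - by rewrite mulr_ge0 ?exprn_ge0 ?ler0n // divr_ge0 // (le_trans _ K4).
  - by rewrite mulr_ge0 ?ler0n // divr_ge0 // (le_trans _ K4).
  - exact: IH (ltnW lj).
  rewrite !natrB ?natrM; try lia.
  have : 0 <= j%:R :> R by rewrite ler0n.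
  move: hyp; rewrite -/z; nra.
have Fpos : 0 < ((2 * z) ^_ h)%:R :> R by rewrite ltr0n ffact_gt0.
rewrite -(ler_pM2r Fpos).
apply: le_trans (_ : (z * e ^_ h)%:R <= _); last by rewrite -natrM ler_nat.
rewrite natrM mulrAC mulrC ler_pM2l ?ltr0n //; exact: ff.
Qed.
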